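(* Let $\Delta,\Sigma$ be alphabets, $\varphi:\Delta\to2^{\Sigma^*}$ a regular language substitution, and $K_1,K_2\subseteq\Delta^+$ regular languages such that $\mathcal{R}_1=(K_1,\varphi)$ and $\mathcal{R}_2=(K_2,\varphi)$ are finite. Then the set difference $\mathcal{R}_1-\mathcal{R}_2$ is a finite rational set of regular languages expressible as $(K_3,\varphi)$ for some regular language $K_3\subseteq K_1$.
   Context: A regular language substitution $\varphi:\Delta\to2^{\Sigma^*}$ maps each symbol to a regular language over $\Sigma$, extended by $\varphi(\delta w)=\varphi(\delta)\varphi(w)$. For $K\subseteq\Delta^+$, $(K,\varphi)=\{\varphi(w)\mid w\in K\}$; when $K$ is regular this set is a rational set of regular languages. *)

(* Defs.v *)
(* alphabets are finTypes, words are seq's, languages are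
   Prop-valued predicates on words, compared extensionally. *)
From mathcomp Require Import all_boot.
Set Implicit Arguments. Unset Strict Implicit. Unset Printing Implicit Defensive.

Definition lang (A : finType) := seq A -> Prop.

Definition lang_eq (A : finType) (L M : lang A) : Prop := forall u, L u <-> M u.

Definition regular (A : finType) (L : lang A) : Prop :=
  exists (Q : finType) (q0 : Q) (d : Q -> A -> Q) (F : pred Q),
    forall u, L u <-> F (foldl d q0 u).

Definition conc (A : finType) (L M : lang A) : lang A :=
  fun u => exists u1 u2, u = u1 ++ u2 /\ L u1 /\ M u2.
Definition eps_lang (A : finType) : lang A := fun u => u = [::].

Definition reg_subst (D S : finType) (phi : D -> lang S) : Prop :=
  forall d, regular (phi d).

Fixpoint subst_word (D S : finType) (phi : D -> lang S) (w : seq D) : lang S :=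
  match w with
  | [::] => @eps_lang S
  | d :: w' => conc (phi d) (subst_word phi w')
  end.

Definition in_plus (D : finType) (K : lang D) : Prop := forall w, K w -> w <> [::].

Definition in_RS (D S : finType) (K : lang D) (phi : D -> lang S) (L : lang S) : Prop :=
  exists w, K w /\ lang_eq L (subst_word phi w).

Definition RS_finite (D S : finType) (K : lang D) (phi : D -> lang S) : Prop :=
  exists (n : nat) (f : 'I_n -> lang S),
    forall L, in_RS K phi L -> exists i, lang_eq L (f i).

(* Main.v *)
Require Import Defs.
From mathcomp Require Import all_boot.
From Stdlib Require Import Classical.

Set Implicit Arguments. Unset Strict Implicit. Unset Printing Implicit Defensive.

Section Fin.
Variable A : finType.

Lemma regular_ext (L M : lang A) : (forall u, L u <-> M u) -> regular L -> regular M.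
Proof.
move=> H [Q [q0 [d [F HF]]]]; exists Q, q0, d, F => u; rewrite -H; exact: HF.
Qed.

Lemma regular_empty : regular (fun _ : seq A => False).
Proof.
exists unit, tt, (fun _ _ => tt), pred0 => u; split=> //.
Qed.

Lemma regular_union (L M : lang A) : regular L -> regular M ->
  regular (fun u => L u \/ M u).
Proof.
move=> [Q1 [q1 [d1 [F1 H1]]]] [Q2 [q2 [d2 [F2 H2]]]].
exists (Q1 * Q2)%type, (q1, q2), (fun q a => (d1 q.1 a, d2 q.2 a)),
  (fun q => F1 q.1 || F2 q.2) => u.
have E : forall u (p1 : Q1) (p2 : Q2),
  foldl (fun q a => (d1 q.1 a, d2 q.2 a)) (p1, p2) u = (foldl d1 p1 u, foldl d2 p2 u).
  by elim=> [|a v IH] p1 p2 //=; rewrite IH.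
rewrite E /= H1 H2; split; [case=> ->; rewrite ?orbT // | by case/orP; auto].
Qed.

Lemma regular_single (w : seq A) : regular (fun u => u = w).
Proof.
set k := size w.
pose d (q : option 'I_k.+1) (a : A) : option 'I_k.+1 :=
  if q is Some q then
    (if (q < k) && (nth a w q == a) then Some (inord q.+1) else None)
  else None.
have Hn : forall u, foldl d None u = None by elim=> [|a u IH] //=.
have key : forall u (q : 'I_k.+1),
  (foldl d (Some q) u == Some ord_max) = (u == drop q w).
  elim=> [|a u IH] q /=.
    have := ltn_ord q => Hq.
    have -> : ([::] == drop q w) = (size (drop q w) == 0) by rewrite size_eq0 eq_sym.
    rewrite size_drop -/k.
    apply/eqP/eqP => [[] ->|/eqP]; first by rewrite subnn.
    rewrite subn_eq0 => H; congr Some; apply: val_inj => /=; apply/eqP.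
    by rewrite eqn_leq H -ltnS ltn_ord.
  rewrite {1}/d.
  case: ifP => [/andP [Hq /eqP Ha]|Hf].
    rewrite IH inordK; last by [].
    by rewrite (drop_nth a Hq) Ha eqseq_cons eqxx.
  rewrite Hn; symmetry; apply/negbTE.
  case: (ltnP q k) Hf => Hq /=.
    by rewrite (drop_nth a Hq) eqseq_cons eq_sym => ->.
  by rewrite drop_oversize.
exists (option 'I_k.+1), (Some ord0), d, (fun q => q == Some ord_max) => u.
rewrite key drop0; split=> [->|/eqP] //.
Qed.

Lemma regular_seq (s : seq (seq A)) : regular (fun u => u \in s).
Proof.
elim: s => [|w s IH].
  apply: regular_ext regular_empty => u; split=> //.
apply: regular_ext (regular_union (regular_single w) IH) => u.
rewrite in_cons; split; [by case=> [->|H]; rewrite ?eqxx ?H ?orbT | by case/orP => [/eqP|]; auto].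
Qed.

End Fin.

Lemma lang_eq_sym (A : finType) (L M : lang A) : lang_eq L M -> lang_eq M L.
Proof. by move=> H u; split; move/H. Qed.

Lemma lang_eq_trans (A : finType) (L M N : lang A) :
  lang_eq L M -> lang_eq M N -> lang_eq L N.
Proof. by move=> H1 H2 u; rewrite H1 H2. Qed.

Theorem proposition9 (D S : finType) (phi : D -> lang S) (K1 K2 : lang D) :
  reg_subst phi ->
  regular K1 -> in_plus K1 ->
  regular K2 -> in_plus K2 ->
  RS_finite K1 phi -> RS_finite K2 phi ->
  exists K3 : lang D,
    regular K3 /\ (forall w, K3 w -> K1 w) /\
    RS_finite K3 phi /\
    (forall L : lang S,
       in_RS K3 phi L <-> (in_RS K1 phi L /\ ~ in_RS K2 phi L)).
Proof.
move=> _ _ _ _ _ [n [f Hf]] _.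
pose P (i : 'I_n) w := K1 w /\ lang_eq (f i) (subst_word phi w) /\
                       ~ in_RS K2 phi (subst_word phi w).
have : forall i : 'I_n, exists o : option (seq D),
    (forall w, o = Some w -> P i w) /\ ((exists w, P i w) -> exists w, o = Some w).
  move=> i; case: (classic (exists w, P i w)) => [[w Hw]|Hn].
    by exists (Some w); split=> [w' [<-]|]; eauto.
  by exists None; split=> // w.
case/fin_all_exists => g Hg.
exists (fun w => exists i, g i = Some w).
split.
  apply: regular_ext (regular_seq (pmap g (enum 'I_n))) => u.
  rewrite mem_pmap; split.
    by case/mapP => i _ ->; exists i.
  by case=> i <-; apply/mapP; exists i; rewrite ?mem_enum.
split; first by move=> w [i /(proj1 (Hg i)) [H _]].
split.
  exists n, f => L [w [[i /(proj1 (Hg i)) [_ [Hi _]]] HL]].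
  by exists i; apply: lang_eq_trans HL (lang_eq_sym Hi).
move=> L; split.
  move=> [w [[i /(proj1 (Hg i)) [H1 [_ H2]]] HL]]; split; first by exists w.
  move=> [w' [H' HL']]; apply: H2; exists w'; split=> //.
  exact: lang_eq_trans (lang_eq_sym HL) HL'.
move=> [[w [H1 HL]] H2].
have [i Hi] := Hf L (ex_intro _ w (conj H1 HL)).
have Pi : P i w.
  split=> //; split; first exact: lang_eq_trans (lang_eq_sym Hi) HL.
  move=> [w' [H' HL']]; apply: H2; exists w'; split=> //.
  exact: lang_eq_trans HL HL'.
have [w' Hw'] := (proj2 (Hg i)) (ex_intro _ w Pi).
have [_ [Hi' _]] := proj1 (Hg i) _ Hw'.
exists w'; split; first by exists i.
exact: lang_eq_trans Hi Hi'.
Qed.
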